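(* Let $A_2\in\mathbf{C}^{n\times n}$. Then $\mathrm{e}^{t\{0,A_2\}}=\{\Phi_1(t),\Phi_2(t)\}$ for $t\in\mathbf{R}^+=[0,\infty)$ and $\{0,A_2\}^t=\{\Phi_1(t),\Phi_2(t)\}$ for $t\in\mathbf{Z}^+=\{0,1,2,\dots\}$, where $$\Phi_1(t)=\begin{cases}\sum_{i=0}^\infty\frac{t^{2i}}{(2i)!}(A_2^{\#}A_2)^i, & t\in\mathbf{R}^+,\\ (A_2^{\#}A_2)^{t/2}, & t\in\mathbf{Z}^+,\ t \text{ even},\\ 0, & t\in\mathbf{Z}^+,\ t\text{ odd},\end{cases}\qquad \Phi_2(t)=\begin{cases}\sum_{i=0}^\infty\frac{t^{2i+1}}{(2i+1)!}A_2(A_2^{\#}A_2)^i, & t\in\mathbf{R}^+,\\ 0, & t\in\mathbf{Z}^+,\ t \text{ even},\\ A_2(A_2^{\#}A_2)^{(t-1)/2}, & t\in\mathbf{Z}^+,\ t\text{ odd}.\end{cases}$$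
   Context: $P^{\#}$ denotes entrywise conjugate. For $A_1,A_2\in\mathbf{C}^{n\times n}$ the bimatrix $\{A_1,A_2\}$ is the real-linear map $x\mapsto A_1x+A_2^{\#}x^{\#}$ on $\mathbf{C}^n$; products are compositions and equality means equality as maps. Powers: $\{A_1,A_2\}^0=\{I_n,0\}$, $\{A_1,A_2\}^i=\{A_1,A_2\}\{A_1,A_2\}^{i-1}$. Exponent: $\mathrm{e}^{t\{A_1,A_2\}}=\sum_{i=0}^\infty\frac{t^i}{i!}\{A_1,A_2\}^i$, $t\in\mathbf{R}$. *)

(* Defs.v *)
From HB Require Import structures.
From mathcomp Require Import all_boot all_order all_algebra.
From mathcomp Require Import all_classical all_reals all_analysis.
From mathcomp Require Import complex.
Export numFieldTopology.Exports numFieldNormedType.Exports.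

Set Implicit Arguments.
Unset Strict Implicit.
Unset Printing Implicit Defensive.

Import Order.TTheory GRing.Theory Num.Theory.
Local Open Scope classical_set_scope.
Local Open Scope ring_scope.

(* Topology / norm on C = R[i]: the usual one, given by the modulus. *)
HB.instance Definition _ (R : realType) := PseudoPointedMetric.copy R[i] (R[i])^o.
HB.instance Definition _ (R : realType) := NormedModule.copy R[i] (R[i])^o.

Section Bimatrix.
Variables (R : realType) (n : nat).
Local Notation C := R[i].

Definition conjm (m p : nat) (P : 'M[C]_(m, p)) : 'M[C]_(m, p) :=
  map_mx (@conjc R) P.

(* the bimatrix {A1, A2} as the real-linear map x |-> A1 x + A2^# x^# *)
Definition bimat (A1 A2 : 'M[C]_n) : 'cV[C]_n -> 'cV[C]_n :=
  fun x => A1 *m x + conjm A2 *m conjm x.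

Fixpoint bipow (A1 A2 : 'M[C]_n) (i : nat) : 'cV[C]_n -> 'cV[C]_n :=
  match i with
  | 0 => bimat 1%:M 0
  | i'.+1 => fun x => bimat A1 A2 (bipow A1 A2 i' x)
  end.

(* e^{t{A1,A2}} = F (as maps): for every x, the series
   sum_i t^i/i! {A1,A2}^i x converges to F x. *)
Definition bimexp_eq (A1 A2 : 'M[C]_n) (t : R) (F : 'cV[C]_n -> 'cV[C]_n)
  : Prop :=
  forall x : 'cV[C]_n,
    series (fun i => ((t ^+ i / (i`!)%:R)%:C)%C *: bipow A1 A2 i x) @ \oo
      --> F x.

Definition Phi1R_term (A2 : 'M[C]_n) (t : R) (i : nat) : 'M[C]_n :=
  ((t ^+ (2 * i) / ((2 * i)`!)%:R)%:C)%C *: (conjm A2 *m A2) ^+ i.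

Definition Phi2R_term (A2 : 'M[C]_n) (t : R) (i : nat) : 'M[C]_n :=
  ((t ^+ (2 * i).+1 / (((2 * i).+1)`!)%:R)%:C)%C *: (A2 *m (conjm A2 *m A2) ^+ i).

Definition Phi1R (A2 : 'M[C]_n) (t : R) : 'M[C]_n := limn (series (Phi1R_term A2 t)).
Definition Phi2R (A2 : 'M[C]_n) (t : R) : 'M[C]_n := limn (series (Phi2R_term A2 t)).

Definition Phi1Z (A2 : 'M[C]_n) (k : nat) : 'M[C]_n :=
  if odd k then 0 else (conjm A2 *m A2) ^+ k./2.

Definition Phi2Z (A2 : 'M[C]_n) (k : nat) : 'M[C]_n :=
  if odd k then A2 *m (conjm A2 *m A2) ^+ (k.-1)./2 else 0.

End Bimatrix.

(* Main.v *)
Require Import Defs.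
From HB Require Import structures.
From mathcomp Require Import all_boot all_order all_algebra.
From mathcomp Require Import all_classical all_reals all_analysis.
From mathcomp Require Import complex.
From mathcomp Require Import zify ring.
Import Order.TTheory GRing.Theory Num.Theory.
Set Implicit Arguments.
Unset Strict Implicit.
Unset Printing Implicit Defensive.
Local Open Scope classical_set_scope.
Local Open Scope ring_scope.
Section S.
Variable R : realType.
Local Notation C := R[i].

Lemma sqrt_sqr_abs (a : R) : Num.sqrt (a ^+ 2) = `|a|.
Proof. by rewrite sqrtr_sqr. Qed.

Lemma Re_le_norm (z : C) : ((`|complex.Re z|)%:C)%C <= `|z|.
Proof.
rewrite normc_def lecR -sqrt_sqr_abs; apply: ler_wsqrtr.
by rewrite lerDl sqr_ge0.
Qed.

Lemma Im_le_norm (z : C) : ((`|complex.Im z|)%:C)%C <= `|z|.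
Proof.
rewrite normc_def lecR -sqrt_sqr_abs; apply: ler_wsqrtr.
by rewrite lerDr sqr_ge0.
Qed.

Lemma norm_le_ReIm (z : C) :
  `|z| <= ((`|complex.Re z| + `|complex.Im z|)%:C)%C.
Proof.
rewrite normc_def lecR.
have h : 0 <= `|complex.Re z| + `|complex.Im z| by rewrite addr_ge0.
set s := _ + _ in h *; rewrite -(ger0_norm h) -(sqrt_sqr_abs s) /s; apply: ler_wsqrtr.
rewrite sqrrD -(real_normK (num_real (complex.Re z))) -(real_normK (num_real (complex.Im z))).
by rewrite addrAC lerDl mulrn_wge0 // mulr_ge0.
Qed.


Lemma C_complete (F : set_system C) : ProperFilter F -> cauchy F -> cvg F.
Proof.
move=> FF /cauchyP Fc.
have cRe : cauchy (@complex.Re R @ F).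
  apply: cauchy_exP => e e0.
  have [|x Fx] := Fc ((e%:C)%C); first by rewrite ltcR.
  exists (complex.Re x) => /=; move: Fx; apply: filterS => y.
  rewrite -!ball_normE /= -ltcR; apply: le_lt_trans.
  by case: x y => [? ?] [? ?]; exact: (Re_le_norm (_ +i* _)%C).
have cIm : cauchy (@complex.Im R @ F).
  apply: cauchy_exP => e e0.
  have [|x Fx] := Fc ((e%:C)%C); first by rewrite ltcR.
  exists (complex.Im x) => /=; move: Fx; apply: filterS => y.
  rewrite -!ball_normE /= -ltcR; apply: le_lt_trans.
  by case: x y => [? ?] [? ?]; exact: (Im_le_norm (_ +i* _)%C).
have ha : cvg (@complex.Re R @ F) by apply: cauchy_cvg.
have hb : cvg (@complex.Im R @ F) by apply: cauchy_cvg.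
set a := lim (@complex.Re R @ F) in ha.
set b := lim (@complex.Im R @ F) in hb.
apply/cvg_ex; exists (a +i* b)%C.
suff : (id @ F) --> (a +i* b)%C by [].
apply/cvgrPdist_lt => e e0.
have e'0 : 0 < complex.Re e / 2.
  by move: e0; rewrite ltcE => /andP[_ ?]; rewrite divr_gt0.
have {}ha := proj1 (cvgrPdist_lt _ _) ha _ e'0.
have {}hb := proj1 (cvgrPdist_lt _ _) hb _ e'0.
near=> t.
have h1 := ha; have h2 := hb.
apply: (le_lt_trans (norm_le_ReIm _)).
have ee : e = ((complex.Re e / 2 + complex.Re e / 2)%:C)%C.
  move: e0; rewrite ltcE => /andP[/eqP ei _].
  by clear -ei; case: e ei => [er ei] /= ->; rewrite -splitr.
rewrite [X in _ < X]ee ltcR.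
have reE (w : C) : complex.Re ((a +i* b)%C - w) = a - complex.Re w by case: w.
have imE (w : C) : complex.Im ((a +i* b)%C - w) = b - complex.Im w by case: w.
rewrite reE imE.
rewrite ltrD //; [near: t; exact: ha | near: t; exact: hb].
Unshelve. all: by end_near. Qed.

End S.
HB.instance Definition _ (R : realType) := Uniform_isComplete.Build R[i] (@C_complete R).
Section T.
Variable R : realType.
Local Notation C := R[i].
Lemma real_pos (e : C) : 0 < e -> e = ((complex.Re e)%:C)%C /\ 0 < complex.Re e.
Proof. by case: e => er ei; rewrite ltcE /= => /andP[/eqP -> ?]. Qed.

Lemma mx_series_majorant m p (u : nat -> 'M[C]_(m,p)) (b : nat -> R) :
  (forall k, `|u k| <= ((b k)%:C)%C) -> cvgn (series b) -> cvgn (series u).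
Proof.
move=> ub /cauchy_cvgP /cauchy_seriesP bc.
apply/cauchy_cvgP/cauchy_seriesP => e /real_pos [-> e'0].
apply: filterS (bc _ e'0) => -[n1 n2] /= h.
apply: (le_lt_trans (ler_norm_sum _ _ _)).
apply: (le_lt_trans (ler_sum _ (fun k _ => ub k))).
rewrite -rmorph_sum ltcR; exact: le_lt_trans (ler_norm _) h.
Qed.

Lemma entry_le_norm m p (M : 'M[C]_(m,p)) i j : `|M i j| <= `|M|.
Proof.
have -> : `|M| = mx_norm M by [].
rewrite mx_normE -[leLHS]nngE num_le.
exact: (le_bigmax _ _ (i, j)).
Qed.

Lemma norm_cases m p (M : 'M[C]_(m,p)) :
  `|M| = 0 \/ exists i j, `|M| = `|M i j|.
Proof.
have [->|/mx_norm_neq0 [[i j] h]] := eqVneq `|M| 0; first by left.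
by right; exists i, j.
Qed.

Lemma norm_le_bound m p (M : 'M[C]_(m,p)) (c : C) :
  0 <= c -> (forall i j, `|M i j| <= c) -> `|M| <= c.
Proof. by move=> c0 h; case: (norm_cases M) => [->|[i [j ->]]]. Qed.

Lemma norm_mulmx m k p (A : 'M[C]_(m,k)) (B : 'M[C]_(k,p)) :
  `|A *m B| <= k%:R * (`|A| * `|B|).
Proof.
apply: norm_le_bound => [|i j]; first by rewrite !mulr_ge0.
rewrite mxE; apply: (le_trans (ler_norm_sum _ _ _)).
apply: le_trans (ler_sum _ (fun l _ => (_ : `|A i l * B l j| <= `|A| * `|B|))) _.
  by move=> l _; rewrite normrM ler_pM // entry_le_norm.
by rewrite sumr_const card_ord mulr_natl.
Qed.

Lemma norm_conjc (z : C) : `|conjc z| = `|z|.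
Proof. by case: z => a b; rewrite !normc_def /= sqrrN. Qed.

Lemma norm_conjm m p (M : 'M[C]_(m,p)) : `|conjm M| = `|M|.
Proof.
apply/eqP; rewrite eq_le; apply/andP; split; apply: norm_le_bound => // i j.
  by rewrite mxE norm_conjc entry_le_norm.
by have := entry_le_norm (conjm M) i j; rewrite mxE norm_conjc.
Qed.

Lemma conjmM m k p (A : 'M[C]_(m,k)) (B : 'M[C]_(k,p)) :
  conjm (A *m B) = conjm A *m conjm B.
Proof. exact: map_mxM. Qed.

Lemma conjmK m p (A : 'M[C]_(m,p)) : conjm (conjm A) = A.
Proof. by apply/matrixP => i j; rewrite !mxE conjcK. Qed.

Lemma conjm0 m p : conjm (0 : 'M[C]_(m,p)) = 0.
Proof. by apply/matrixP => i j; rewrite !mxE conjc0. Qed.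

Lemma conjm1 k : conjm (1%:M : 'M[C]_k) = 1%:M.
Proof. by apply/matrixP => i j; rewrite !mxE rmorph_nat. Qed.

Lemma conjmX k (A : 'M[C]_k) j : conjm (A ^+ j) = conjm A ^+ j.
Proof.
elim: j => [|j IH]; first by rewrite !expr0 conjm1.
by rewrite !exprS -!mulmxE conjmM IH.
Qed.

Lemma conjmZR m p (a : R) (A : 'M[C]_(m,p)) :
  conjm ((a%:C)%C *: A) = (a%:C)%C *: conjm A.
Proof. by apply/matrixP => i j; rewrite !mxE rmorphM; congr (_ * _); exact: conjc_real. Qed.

Section Pow.
Variables (n : nat) (A2 : 'M[C]_n).
Local Notation M := (conjm A2 *m A2).

Lemma bipow_even j x : bipow 0 A2 j.*2 x = M ^+ j *m x.
Proof.
elim: j x => [|j IH] x.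
  by rewrite /= /bimat expr0 conjm0 mul0mx addr0.
have -> : j.+1.*2 = (j.*2).+2 by rewrite -!addnn addnS addSn.
rewrite /= /bimat IH !mul0mx !add0r conjmM conjmK.
by rewrite !conjmK exprS -mulmxE !mulmxA.
Qed.

Lemma bipow_odd j x :
  bipow 0 A2 j.*2.+1 x = conjm (A2 *m M ^+ j) *m conjm x.
Proof.
change (bimat 0 A2 (bipow 0 A2 j.*2 x) = conjm (A2 *m M ^+ j) *m conjm x).
by rewrite bipow_even /bimat mul0mx add0r !conjmM mulmxA.
Qed.

Lemma part2 k x : bipow 0 A2 k x = bimat (Phi1Z A2 k) (Phi2Z A2 k) x.
Proof.
rewrite -(odd_double_half k); case: (odd k); rewrite ?add0n ?add1n /Phi1Z /Phi2Z.
  rewrite bipow_odd oddS odd_double /=.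
  by rewrite half_double /bimat mul0mx add0r.
by rewrite bipow_even odd_double half_double /bimat conjm0 mul0mx addr0.
Qed.
End Pow.


Lemma interleave m p (s : nat -> 'M[C]_(m,p)) (L : 'M[C]_(m,p)) :
  (fun N => s N.*2) @ \oo --> L -> (fun N => s N.*2.+1) @ \oo --> L ->
  s @ \oo --> L.
Proof.
move=> /cvgrPdist_lt h1 /cvgrPdist_lt h2; apply/cvgrPdist_lt => e e0.
have [N1 _ H1] := h1 e e0; have [N2 _ H2] := h2 e e0.
exists (N1 + N2).*2 => // k /= hk.
move: hk; rewrite -[k]odd_double_half; case: (odd k) => /= hk.
  by apply: H2 => /=; move: hk; rewrite -!addnn; lia.
by apply: H1 => /=; move: hk; rewrite add0n -!addnn; lia.
Qed.

Lemma conjmB m p (A B : 'M[C]_(m,p)) : conjm (A - B) = conjm A - conjm B.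
Proof. by apply/matrixP => i j; rewrite !mxE rmorphB. Qed.

Lemma conjmD m p (A B : 'M[C]_(m,p)) : conjm (A + B) = conjm A + conjm B.
Proof. by apply/matrixP => i j; rewrite !mxE rmorphD. Qed.

Lemma cvg_shift1 m p (s : nat -> 'M[C]_(m,p)) (L : 'M[C]_(m,p)) :
  s @ \oo --> L -> (fun N => s N.+1) @ \oo --> L.
Proof.
move=> /cvgrPdist_lt h; apply/cvgrPdist_lt => e e0.
have [N _ H] := h e e0; exists N => // k /= hk; apply: H; exact: leqW.
Qed.

Lemma cvg_mulmxr m k p (u : nat -> 'M[C]_(m,k)) (L : 'M[C]_(m,k)) (x : 'M[C]_(k,p)) :
  u @ \oo --> L -> (fun N => u N *m x) @ \oo --> L *m x.
Proof.
move=> /cvgrPdist_lt h; apply/cvgrPdist_lt => e e0.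
set c := k%:R * `|x| + 1.
have c0 : 0 < c by rewrite /c ltr_wpDl // mulr_ge0.
apply: filterS (h (e / c) (divr_gt0 e0 c0)) => N hN.
rewrite -mulmxBl; apply: le_lt_trans (norm_mulmx _ _) _.
have : `|L - u N| * c < e by rewrite -ltr_pdivlMr.
apply: le_lt_trans.
by rewrite /c mulrDr mulr1 mulrCA lerDl.
Qed.

Lemma cvg_conjm m p (u : nat -> 'M[C]_(m,p)) (L : 'M[C]_(m,p)) :
  u @ \oo --> L -> (fun N => conjm (u N)) @ \oo --> conjm L.
Proof.
move=> /cvgrPdist_lt h; apply/cvgrPdist_lt => e e0.
by apply: filterS (h e e0) => N; rewrite -conjmB norm_conjm.
Qed.

Lemma normcR (r : R) : `|(r%:C)%C| = ((`|r|)%:C)%C.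
Proof. by rewrite normc_def /= expr0n addr0 sqrt_sqr_abs. Qed.

Lemma ge0_realC (z : C) : 0 <= z -> z = ((complex.Re z)%:C)%C.
Proof. by case: z => a b; rewrite lecE /= => /andP[/eqP -> _]. Qed.

Lemma ge0_Re (z : C) : 0 <= z -> 0 <= complex.Re z.
Proof. by case: z => a b; rewrite lecE /= => /andP[_ ->]. Qed.

Lemma norm_one k : `|(1%:M : 'M[C]_k)| <= 1.
Proof.
apply: norm_le_bound => // i j; rewrite mxE.
by case: eqP => _; rewrite ?normr1 ?normr0.
Qed.

Lemma fact_le (x : R) k m : 0 <= x -> (k <= m)%N ->
  x / (m`!)%:R <= x / (k`!)%:R.
Proof.
move=> x0 km; apply: ler_wpM2l => //.
by rewrite lef_pV2 ?posrE ?ltr0n ?fact_gt0 // ler_nat leq_fact.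
Qed.

Section Conv.
Variables (n : nat) (A2 : 'M[C]_n) (t : R).
Hypothesis t0 : 0 <= t.
Local Notation M := (conjm A2 *m A2).
Local Notation q := (n%:R * complex.Re `|M|).
Local Notation a := (complex.Re `|A2|).
Let q0 : 0 <= q. Proof. by rewrite mulr_ge0 // ge0_Re. Qed.
Let a0 : 0 <= a. Proof. by rewrite ge0_Re. Qed.

Lemma normMX k : `|M ^+ k| <= ((q ^+ k)%:C)%C.
Proof.
elim: k => [|k IH]; first by rewrite !expr0 rmorph1; exact: norm_one.
rewrite [M ^+ _]exprS -mulmxE; apply: le_trans (norm_mulmx _ _) _.
apply: le_trans (_ : _ <= n%:R * (`|M| * ((q ^+ k)%:C)%C)) _.
  by rewrite ler_wpM2l // ler_wpM2l.
rewrite [X in _ * (X * _) <= _](ge0_realC (normr_ge0 M)) exprS !rmorphM rmorph_nat.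
by rewrite mulrA.
Qed.

Lemma cvg1 : cvgn (series (Phi1R_term A2 t)).
Proof.
apply: (@mx_series_majorant _ _ _
   (fun k => t ^+ (2 * k) / ((2 * k)`!)%:R * q ^+ k)).
  move=> k; rewrite /Phi1R_term normrZ normcR ger0_norm ?divr_ge0 ?exprn_ge0 //.
  rewrite [X in _ <= X]rmorphM; apply: ler_wpM2l; last exact: normMX.
  by rewrite ler0c divr_ge0 ?exprn_ge0.
apply: (@series_le_cvg _ _ (exp_coeff (t ^+ 2 * q))) => [k|k|k|]; last first.
- exact: is_cvg_series_exp_coeff.
- rewrite /exp_coeff /= (exprMn k (t ^+ 2)) -exprM [leRHS]mulrAC.
  by apply: ler_wpM2r; rewrite ?exprn_ge0 // fact_le ?exprn_ge0 // leq_pmull.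
- by rewrite /exp_coeff /= divr_ge0 // exprn_ge0 // mulr_ge0 // sqr_ge0.
- by rewrite /= mulr_ge0 // ?divr_ge0 // exprn_ge0.
Qed.

Lemma cvg2 : cvgn (series (Phi2R_term A2 t)).
Proof.
apply: (@mx_series_majorant _ _ _
   (fun k => t ^+ (2 * k).+1 / (((2 * k).+1)`!)%:R * (n%:R * (a * q ^+ k)))).
  move=> k; rewrite /Phi2R_term normrZ normcR ger0_norm ?divr_ge0 ?exprn_ge0 //.
  rewrite [X in _ <= X]rmorphM; apply: ler_wpM2l.
    by rewrite ler0c divr_ge0 ?exprn_ge0.
  apply: le_trans (norm_mulmx _ _) _.
  apply: le_trans (_ : _ <= n%:R * (`|A2| * ((q ^+ k)%:C)%C)) _.
    by apply: ler_wpM2l => //; apply: ler_wpM2l => //; exact: normMX.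
  rewrite [X in _ * (X * _) <= _](ge0_realC (normr_ge0 A2)).
  rewrite [X in _ <= X]rmorphM rmorph_nat [X in _ <= _ * X]rmorphM.
  done.
apply: (@series_le_cvg _ _ (fun k => (t * (n%:R * a)) * exp_coeff (t ^+ 2 * q) k))
  => [k|k|k|]; last first.
- rewrite (_ : (fun k => _) = (t * (n%:R * a)) *: exp_coeff (t ^+ 2 * q)).
    apply: is_cvg_seriesZ; exact: is_cvg_series_exp_coeff.
  by apply: funext.
- rewrite /= /exp_coeff /=.
  have -> : t ^+ (2 * k).+1 / (((2 * k).+1)`!)%:R * (n%:R * (a * q ^+ k)) =
     (t * (n%:R * a)) * ((t ^+ 2 * q) ^+ k / (((2 * k).+1)`!)%:R).
    by rewrite (exprMn k (t ^+ 2)) -exprM exprS; ring.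
  apply: ler_wpM2l; first by rewrite mulr_ge0 // mulr_ge0.
  by apply: fact_le; [rewrite exprn_ge0 // mulr_ge0 // sqr_ge0 | rewrite leqW // leq_pmull].
- rewrite /= /exp_coeff /=; apply: mulr_ge0; first by rewrite !mulr_ge0.
  by rewrite divr_ge0 // exprn_ge0 // mulr_ge0 // sqr_ge0.
- rewrite /=; apply: mulr_ge0; first by rewrite divr_ge0 // exprn_ge0.
  by rewrite !mulr_ge0 // exprn_ge0.
Qed.
End Conv.

Section Main.
Variables (n : nat) (A2 : 'M[C]_n) (t : R) (x : 'cV[C]_n).
Let u := (fun i => ((t ^+ i / (i`!)%:R)%:C)%C *: bipow 0 A2 i x).

Lemma u_even N : u N.*2 = Phi1R_term A2 t N *m x.
Proof. by rewrite /u bipow_even /Phi1R_term -scalemxAl mul2n. Qed.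

Lemma u_odd N : u N.*2.+1 = conjm (Phi2R_term A2 t N) *m conjm x.
Proof. by rewrite /u bipow_odd /Phi2R_term conjmZR scalemxAl mul2n. Qed.

Lemma series_even N : series u N.*2 =
  series (Phi1R_term A2 t) N *m x + conjm (series (Phi2R_term A2 t) N) *m conjm x.
Proof.
elim: N => [|N IH].
  by rewrite /series /= !big_geq // mul0mx conjm0 mul0mx addr0.
rewrite doubleS !seriesSr IH u_even u_odd conjmD !mulmxDl.
by rewrite -addrA addrACA.
Qed.

Lemma series_odd N : series u N.*2.+1 =
  series (Phi1R_term A2 t) N.+1 *m x + conjm (series (Phi2R_term A2 t) N) *m conjm x.
Proof. by rewrite seriesSr series_even u_even seriesSr mulmxDl addrAC. Qed.
End Main.
End T.

Theorem corollary2 (R : realType) (n : nat) (A2 : 'M[R[i]]_n) :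
  (forall t : R, 0 <= t ->
     [/\ cvgn (series (Phi1R_term A2 t)),
         cvgn (series (Phi2R_term A2 t)) &
         bimexp_eq 0 A2 t (bimat (Phi1R A2 t) (Phi2R A2 t))])
  /\
  (forall (k : nat) (x : 'cV[R[i]]_n),
     bipow 0 A2 k x = bimat (Phi1Z A2 k) (Phi2Z A2 k) x).
Proof.
split; last by move=> k x; exact: part2.
move=> t t0; have c1 := @cvg1 R n A2 t t0; have c2 := @cvg2 R n A2 t t0.
split => // x; rewrite /bimat.
have h1 := cvg_mulmxr (x:=x) c1.
have h1' := cvg_mulmxr (x:=x) (cvg_shift1 c1).
have h2 := cvg_mulmxr (x:=conjm x) (cvg_conjm c2).
apply: interleave.
  rewrite (_ : (fun N => _) = (fun N => series (Phi1R_term A2 t) N *m x +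
      conjm (series (Phi2R_term A2 t) N) *m conjm x)); last first.
    by apply: funext => N; rewrite series_even.
  exact: (cvgD h1 h2).
rewrite (_ : (fun N => _) = (fun N => series (Phi1R_term A2 t) N.+1 *m x +
    conjm (series (Phi2R_term A2 t) N) *m conjm x)); last first.
  by apply: funext => N; rewrite series_odd.
exact: (cvgD h1' h2).
Qed.
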